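(* Let $\alpha,\beta\in\mathbb{R}$ with $\alpha\neq 0$. Consider a linear pentapod with planar base, normalized as in the context, whose architecture parameters satisfy $r_l=\alpha x_l+\beta y_l$ for $l=1,\dots,5$ and $x_2=1/\alpha$. Then, as a polynomial in $u_1,\dots,u_6$, $$\det(S)=c\cdot u_3\bigl[u_6(\alpha u_1+\beta u_2-1)-u_3(\alpha u_4+\beta u_5)\bigr]$$ for some real constant $c$ depending only on the architecture parameters. In particular, whenever $c\ne 0$, the singularity variety $\{\det S=0\}\subset\mathbb{R}^6$ is the zero set of $u_3\bigl[u_6(\alpha u_1+\beta u_2-1)-u_3(\alpha u_4+\beta u_5)\bigr]$.
   Context: A linear pentapod has five legs joining base anchor points $M_l=(x_l,y_l,0)\in\mathbb{R}^3$ (planar base) to platform anchor points $m_l=\vec p+r_l\vec i$, $l=1,\dots,5$, lying on a line, where $\vec i=(u_1,u_2,u_3)$ is the direction of the platform line and $\vec p=(u_4,u_5,u_6)$ its position; a pose is a point $(u_1,\dots,u_6)\in\mathbb{R}^6$. Coordinates are normalized so that $M_1=(0,0,0)$, $r_1=0$, $M_2=(x_2,0,0)$, $r_2=1$. The singular poses are the zeros of $\det S$, where $S$ is the $7\times 7$ matrix whose rows are $(1,u_1,u_2,u_3,u_4,u_5,u_6)$, $(0,u_4,u_5,u_6,0,0,0)$, $(0,0,0,0,u_1,u_2,u_3)$, and, for $l=2,3,4,5$, $(r_l,x_l,y_l,0,r_lx_l,r_ly_l,0)$. *)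

(* Defs.v *)
From HB Require Import structures.
From mathcomp Require Import all_boot all_order all_algebra.
Set Implicit Arguments. Unset Strict Implicit. Unset Printing Implicit Defensive.
Import Order.TTheory GRing.Theory Num.Theory.
Local Open Scope ring_scope.

(* Leg l (1-based, l = 1..5) is encoded by the ordinal l-1 : 'I_5.
   x l, y l : base anchor coordinates M_l = (x l, y l, 0); r l : platform
   anchor parameter, m_l = p + r_l i. *)

Definition Srow (R : nzRingType) (x y r : 'I_5 -> R)
    (u1 u2 u3 u4 u5 u6 : R) (i : nat) : seq R :=
  match i with
  | 0 => [:: 1; u1; u2; u3; u4; u5; u6]
  | 1 => [:: 0; u4; u5; u6; 0; 0; 0]
  | 2 => [:: 0; 0; 0; 0; u1; u2; u3]
  | _ => let l : 'I_5 := inord (i - 2) in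
         [:: r l; x l; y l; 0; r l * x l; r l * y l; 0]
  end.

(* Rows 3..6 (0-based) correspond to legs l = 2,3,4,5 (ordinals 1..4). *)
Definition Smat (R : nzRingType) (x y r : 'I_5 -> R)
    (u1 u2 u3 u4 u5 u6 : R) : 'M[R]_7 :=
  \matrix_(i < 7, j < 7) nth 0 (Srow x y r u1 u2 u3 u4 u5 u6 i) j.

(* Main.v *)
Require Import Defs.
From HB Require Import structures.
From mathcomp Require Import all_boot all_order all_algebra ring.
Import Order.TTheory GRing.Theory Num.Theory.
Local Open Scope ring_scope.

Section D.
Variable R : comPzRingType.
Implicit Types f : nat -> nat -> R.
Fixpoint dsum (m : nat) (g : nat -> R) : R :=
  match m with 0%N => 0 | m'.+1 => dsum m' g + g m' end.
Fixpoint dexp (n : nat) (f : nat -> nat -> R) : R :=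
  match n with 0%N => 1 | n'.+1 =>
    dsum n (fun j => (-1) ^+ j * f 0%N j * dexp n' (fun i k => f i.+1 (bump j k))) end.

Lemma dsumE m (g : nat -> R) : \sum_(j < m) g j = dsum m g.
Proof. by elim: m => [|m IH]; rewrite ?big_ord0 // big_ord_recr /= IH. Qed.

Lemma dexpS n f : dexp n.+1 f =
  dsum n.+1 (fun j => (-1) ^+ j * f 0%N j * dexp n (fun i k => f i.+1 (bump j k))).
Proof. by []. Qed.

Lemma detE n (f : nat -> nat -> R) : \det (\matrix_(i < n, j < n) f i j) = dexp n f.
Proof.
elim: n f => [|n IH] f; first by rewrite det_mx00.
rewrite (expand_det_row _ ord0) dexpS -dsumE; apply: eq_bigr => j _.
rewrite /cofactor mxE add0n -IH mulrA [_ * f _ _]mulrC; congr (_ * _ * \det _).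
by apply/matrixP => i k; rewrite !mxE lift0.
Qed.

Fixpoint dexpm (n : nat) (f : nat -> nat -> R) (m : nat -> nat -> bool) : R :=
  match n with 0%N => 1 | n'.+1 =>
    dsum n (fun j => if m 0%N j then
       (-1) ^+ j * f 0%N j * dexpm n' (fun i k => f i.+1 (bump j k)) (fun i k => m i.+1 (bump j k))
       else 0) end.

Lemma dsum_ext m (g h : nat -> R) : (forall j, (j < m)%N -> g j = h j) -> dsum m g = dsum m h.
Proof.
elim: m => [|m IH] E //=; rewrite IH ?E // => j Hj; apply: E; exact: ltnW.
Qed.

Lemma dexpmE n f m : (forall i j, (i < n)%N -> (j < n)%N -> m i j = false -> f i j = 0) ->
  dexpm n f m = dexp n f.
Proof.
elim: n f m => [|n IH] f m H //.
rewrite dexpS; apply: dsum_ext => j Hj.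
case E: (m 0%N j); cbv beta.
  congr (_ * _); apply: IH => i k Hi Hk Hm; apply: H => //.
  by rewrite /bump; case: (j <= k)%N; rewrite /= ?add1n ?add0n // ltnS; apply: ltnW.
by rewrite H ?mulr0 ?mul0r.
Qed.
End D.


Definition cc {R : realFieldType} (x y r : 'I_5 -> R) : R :=
  - @dexp R 4 (fun i j => nth 0 (Srow x y r 0 0 0 0 0 0 i.+3) (nth 0%N [:: 1; 2; 4; 5]%N j)).

Lemma detS (R : realFieldType) (alpha beta : R) (x y r : 'I_5 -> R) :
  (forall l : 'I_5, r l = alpha * x l + beta * y l) ->
  forall u1 u2 u3 u4 u5 u6,
  \det (Smat x y r u1 u2 u3 u4 u5 u6) = cc x y r * (u3 * (u6 * (alpha * u1 + beta * u2 - 1)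
                    - u3 * (alpha * u4 + beta * u5))).
Proof.
move=> hr u1 u2 u3 u4 u5 u6.
rewrite (_ : \det _ = @dexp R 7 (fun i j => nth 0 (Srow x y r u1 u2 u3 u4 u5 u6 i) j)); last exact: detE.
rewrite -(@dexpmE R 7 _ (fun i j => match i with 0 => true | 1 => (0 < j < 4)%N | 2 => (3 < j)%N | _ => (j != 3) && (j != 6) end)); last first.
  move=> i j Hi Hj; case: i Hi => [|[|[|i]]] Hi //=.
  - by case: j Hj => [|[|[|[|[|[|[|j]]]]]]].
  - by case: j Hj => [|[|[|[|[|[|[|j]]]]]]].
  - by case/nandP => /negPn/eqP ->.
rewrite /cc -(@dexpmE R 4 _ (fun _ _ => true)) //.
rewrite /= !hr.
rewrite ?(mul0r, mulr0, add0r, addr0).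
ring.
Qed.

Theorem mainTheorem2 (R : realFieldType) (alpha beta : R)
    (x y r : 'I_5 -> R) :
  alpha != 0 ->
  (* normalization: M_1 = (0,0,0), r_1 = 0, M_2 = (x_2,0,0), r_2 = 1 *)
  x (inord 0) = 0 -> y (inord 0) = 0 -> r (inord 0) = 0 ->
  y (inord 1) = 0 -> r (inord 1) = 1 ->
  (* architecture hypotheses *)
  (forall l : 'I_5, r l = alpha * x l + beta * y l) ->
  x (inord 1) = alpha^-1 ->
  exists c : R,
    (forall u1 u2 u3 u4 u5 u6 : R,
       \det (Smat x y r u1 u2 u3 u4 u5 u6)
       = c * (u3 * (u6 * (alpha * u1 + beta * u2 - 1)
                    - u3 * (alpha * u4 + beta * u5))))
    /\ (c != 0 ->
        forall u1 u2 u3 u4 u5 u6 : R,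
          \det (Smat x y r u1 u2 u3 u4 u5 u6) = 0 <->
          u3 * (u6 * (alpha * u1 + beta * u2 - 1)
                - u3 * (alpha * u4 + beta * u5)) = 0).
Proof.
move=> _ _ _ _ _ _ hr _.
exists (cc x y r); split; first exact: (@detS _ alpha beta x y r hr).
move=> c0 u1 u2 u3 u4 u5 u6; rewrite (@detS _ alpha beta x y r hr).
split => [/eqP|->]; last by rewrite mulr0.
by rewrite mulf_eq0 (negbTE c0) /= => /eqP.
Qed.
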